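(* For every planar rooted tree $t$, the antipode $S$ of $\mathcal{H}$ satisfies $S(t)=-\sum_{c}(-1)^{n_c}W^c(t)$, where the sum runs over all left cuts $c$ of $t$ (including the empty cut).
   Context: Planar rooted trees have their children linearly ordered left to right; a planar forest is a finite, possibly empty, sequence of planar rooted trees; $\mathcal{H}$ is the free associative unital algebra over a field $K$ on planar rooted trees, with basis the planar forests and product concatenation. $B^+(F)$ is the tree obtained by grafting the trees of $F$ on a new common root; $\varepsilon(F)=\delta_{F,1}$. $\Delta$ is the unique linear map with $\Delta(1)=1\otimes1$, $\Delta(xy)=(x\otimes1)\Delta(y)+\Delta(x)(1\otimes y)-x\otimes y$, $\Delta(B^+(x))=B^+(x)\otimes 1+(\mathrm{Id}\otimes B^+)\Delta(x)$; with it $\mathcal{H}$ is a graded infinitesimal bialgebra, and its antipode $S$ is the inverse of $\mathrm{Id}$ for the convolution product $f\star g=m\circ(f\otimes g)\circ\Delta$ on linear endomorphisms (unit $1\varepsilon$). Orders on vertices: $s\geq_{high}s'$ iff $s'=s$ or $s'$ is an ancestor of $s$; for $\geq_{high}$-incomparable $s,s'$ in a forest $t_1\cdots t_n$, $s\geq_{left}s'$ iff $s\in t_i,s'\in t_j$ with $i<j$, or both lie in $t_i$ and $s\geq_{left}s'$ in the forest obtained from $t_i$ by deleting its root (recursively); $s\geq_{h,l}s'$ iff $s\geq_{high}s'$ or $s\geq_{left}s'$ (a total order). For a tree $t$, let $s$ be its greatest vertex for $\geq_{h,l}$ (its leftmost leaf). A left edge is an edge on the path from the root to $s$. A left cut $c$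 is a (possibly empty) set of left edges; cutting them splits $t$ into trees $t_1,\dots,t_n$ indexed so that their roots satisfy $r_1\geq_{h,l}\cdots\geq_{h,l}r_n$ in $t$; $W^c(t)=t_1\cdots t_n$, and $n_c$ is the number of edges in $c$. *)

(* Defs.v *)
From HB Require Import structures.
From mathcomp Require Import all_boot all_algebra.
From mathcomp Require Import finmap.
From mathcomp Require Import monalg.

Set Implicit Arguments.
Unset Strict Implicit.
Unset Printing Implicit Defensive.

Import GRing.Theory.
Local Open Scope ring_scope.

Inductive ptree : Type := Node of seq ptree.

Fixpoint ptree_enc (t : ptree) : GenTree.tree unit :=
  let: Node ts := t in GenTree.Node 0 (map ptree_enc ts).

Fixpoint ptree_dec (g : GenTree.tree unit) : ptree :=
  match g with
  | GenTree.Leaf _ => Node [::]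
  | GenTree.Node _ l => Node (map ptree_dec l)
  end.

Fixpoint ptree_encK (t : ptree) : ptree_dec (ptree_enc t) = t :=
  match t return ptree_dec (ptree_enc t) = t with
  | Node ts => f_equal Node
      ((fix aux (l : seq ptree) : map ptree_dec (map ptree_enc l) = l :=
          match l return map ptree_dec (map ptree_enc l) = l with
          | [::] => erefl
          | x :: l' => f_equal2 cons (ptree_encK x) (aux l')
          end) ts)
  end.

HB.instance Definition _ := Countable.copy ptree (can_type ptree_encK).

Definition forest := {fmonom ptree}.

(* H = free associative unital K-algebra on planar trees; its basis is the
   set of planar forests and its product is concatenation. *)
Definition H (K : fieldType) := {malg K[forest]}.

(* Pairs of forests, with the componentwise monoid structure; the algebra
   {malg K[fpair]} is H (x) H with its tensor-product algebra structure. *)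
Definition fpair := (forest * forest)%type.
HB.instance Definition _ := Choice.on fpair.

Definition fpone : fpair := (mone : forest, mone : forest).
Definition fpmul (p q : fpair) : fpair := (mmul p.1 q.1, mmul p.2 q.2).

Lemma fpmulA : associative fpmul.
Proof. by move=> [a b] [c d] [e f]; rewrite /fpmul /= !mulmA. Qed.
Lemma fpmul1m : left_id fpone fpmul.
Proof. by move=> [a b]; rewrite /fpmul /= !mul1m. Qed.
Lemma fpmulm1 : right_id fpone fpmul.
Proof. by move=> [a b]; rewrite /fpmul /= !mulm1. Qed.
Lemma fpmul_eq1 p q : fpmul p q = fpone -> p = fpone /\ q = fpone.
Proof.
case: p q => [a b] [c d]; rewrite /fpmul /fpone /= => -[/unitm[-> ->] /unitm[-> ->]].
by [].
Qed.

HB.instance Definition _ := Choice_isMonomialDef.Build fpair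
  fpmulA fpmul1m fpmulm1 fpmul_eq1.

Definition H2 (K : fieldType) := {malg K[fpair]}.

Section Ops.
Variable K : fieldType.

Definition tens (x y : H K) : H2 K :=
  \sum_(u <- msupp x) \sum_(v <- msupp y) (x@_u * y@_v) *: << (u, v) >>.

Definition Bplus_forest (F : forest) : forest := FMonom [:: Node F].
Definition Bplus (x : H K) : H K :=
  \sum_(u <- msupp x) x@_u *: << Bplus_forest u >>.

Definition IdxBplus (z : H2 K) : H2 K :=
  \sum_(p <- msupp z) z@_p *: tens << p.1 >> (Bplus << p.2 >>).

Definition eps (x : H K) : K := x@_(mone : forest).
Definition unit_eps (x : H K) : H K := eps x *: 1.

Definition conv (Delta : H K -> H2 K) (f g : H K -> H K) (x : H K) : H K :=
  \sum_(p <- msupp (Delta x)) (Delta x)@_p *: (f << p.1 >> * g << p.2 >>).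

Definition is_coproduct (Delta : H K -> H2 K) : Prop :=
  [/\ Delta 1 = tens 1 1,
      forall x y : H K,
        Delta (x * y) = tens x 1 * Delta y + Delta x * tens 1 y - tens x y
    & forall x : H K, Delta (Bplus x) = tens (Bplus x) 1 + IdxBplus (Delta x)].
End Ops.

(* Left cuts.  The left edges of t are the edges on the path from the  *)
(* root to the leftmost leaf; there are [ldepth t] of them, numbered   *)
(* 0, 1, ... starting from the root.                                   *)
Fixpoint ldepth (t : ptree) : nat :=
  let: Node ts := t in
  match ts with
  | t1 :: _ => (ldepth t1).+1
  | [::] => 0
  end.

(* [cutL t bs]: bs.[i] says whether the i-th left edge (from the root)
   is cut.  Returns (component containing the root, list of the other
   components ordered by decreasing root for >=_{h,l}, i.e. deepest
   first). *)
Fixpoint cutL (t : ptree) (bs : seq bool) : ptree * seq ptree :=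
  let: Node ts := t in
  match ts, bs with
  | t1 :: rest, b :: bs' =>
      let: (r, ds) := cutL t1 bs' in
      if b then (Node rest, ds ++ [:: r]) else (Node (r :: rest), ds)
  | _, _ => (Node ts, [::])
  end.

Definition cut_bits (t : ptree) (c : {set 'I_(ldepth t)}) : seq bool :=
  [seq i \in c | i <- enum 'I_(ldepth t)].

(* W^c(t) = t_1 ... t_n with r_1 >=_{h,l} ... >=_{h,l} r_n; the root
   component comes last. *)
Definition Wc (t : ptree) (c : {set 'I_(ldepth t)}) : seq ptree :=
  let: (r, ds) := cutL t (cut_bits c) in ds ++ [:: r].

(* Main.v *)
Require Import Defs.
From HB Require Import structures.
From mathcomp Require Import all_boot all_algebra.
From mathcomp Require Import finmap.
From mathcomp Require Import monalg.
Import GRing.Theory.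
Local Open Scope ring_scope.
Set Implicit Arguments.
Unset Strict Implicit.
Unset Printing Implicit Defensive.

Section Gen.
Variable K : fieldType.

Definition Lg (M T : monomType) (h : M -> {malg K[T]}) (z : {malg K[M]}) : {malg K[T]} :=
  mmap (@mkmalgU T K mone) h z.

Lemma LgE (M T : monomType) (h : M -> {malg K[T]}) z :
  Lg h z = \sum_(p <- msupp z) z@_p *: h p.
Proof. by rewrite /Lg mmapE; apply: eq_bigr => p _; rewrite mul_malgC. Qed.

Lemma LgU (M T : monomType) (h : M -> {malg K[T]}) c m :
  Lg h << c *g m >> = c *: h m.
Proof. by rewrite /Lg mmapU mul_malgC. Qed.

Lemma Lg1 (M T : monomType) (h : M -> {malg K[T]}) m : Lg h << m >> = h m.
Proof. by rewrite LgU scale1r. Qed.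

Lemma LgD (M T : monomType) (h : M -> {malg K[T]}) x y :
  Lg h (x + y) = Lg h x + Lg h y.
Proof. by rewrite /Lg raddfD. Qed.

Lemma LgB (M T : monomType) (h : M -> {malg K[T]}) x y :
  Lg h (x - y) = Lg h x - Lg h y.
Proof. by rewrite /Lg raddfB. Qed.

Lemma Lg_sum (M T : monomType) (h : M -> {malg K[T]}) (I : Type) (r : seq I) (F : I -> {malg K[M]}) :
  Lg h (\sum_(i <- r) F i) = \sum_(i <- r) Lg h (F i).
Proof. by rewrite /Lg raddf_sum. Qed.

Lemma LgZ (M T : monomType) (h : M -> {malg K[T]}) c z :
  Lg h (c *: z) = c *: Lg h z.
Proof.
rewrite !LgE msuppZ; case: eqP => [->|_].
  by rewrite big_seq_fset0 scale0r.
rewrite scaler_sumr; apply: eq_bigr => p _; by rewrite mcoeffZ scalerA.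
Qed.

Lemma Lg_ext (M T : monomType) (h1 h2 : M -> {malg K[T]}) z :
  h1 =1 h2 -> Lg h1 z = Lg h2 z.
Proof. by move=> e; rewrite !LgE; apply: eq_bigr => p _; rewrite e. Qed.

Lemma Lg_comp (M M' T : monomType) (g : M -> M') (h : M' -> {malg K[T]}) z :
  Lg h (Lg (fun p => << g p >>) z) = Lg (fun p => h (g p)) z.
Proof.
rewrite [Lg _ z]LgE Lg_sum LgE; apply: eq_bigr => p _.
by rewrite LgZ Lg1.
Qed.

Lemma Lg_mull (M T : monomType) (h : M -> {malg K[T]}) q z :
  Lg h (<< q >> * z) = Lg (fun p => h (mmul q p)) z.
Proof.
rewrite {1}(monalgE z) mulr_sumr Lg_sum LgE; apply: eq_bigr => p _.
by rewrite malgM_def fgmulUU LgU mul1r.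
Qed.

Lemma Lg_mulr (M T : monomType) (h : M -> {malg K[T]}) q z :
  Lg h (z * << q >>) = Lg (fun p => h (mmul p q)) z.
Proof.
rewrite {1}(monalgE z) mulr_suml Lg_sum LgE; apply: eq_bigr => p _.
by rewrite malgM_def fgmulUU LgU mulr1.
Qed.

Lemma malgC_comm (M : monomType) (c : K) (a : {malg K[M]}) : a * c%:MP = c%:MP * a.
Proof.
rewrite (monalgE a) mulr_suml mulr_sumr; apply: eq_bigr => p _.
by rewrite !malgM_def !fgmulUU mulm1 mul1m mulrC.
Qed.

Lemma scalerAr' (M : monomType) (c : K) (a b : {malg K[M]}) : a * (c *: b) = c *: (a * b).
Proof. by rewrite -!mul_malgC mulrA malgC_comm mulrA. Qed.

Lemma Lg_mul_left (M T : monomType) (h : M -> {malg K[T]}) a z :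
  Lg (fun p => a * h p) z = a * Lg h z.
Proof.
rewrite !LgE mulr_sumr; apply: eq_bigr => p _; by rewrite scalerAr'.
Qed.

End Gen.

Lemma zlem1 (V : zmodType) (A B S1 S2 : V) :
  A + S1 + (A + B + S2) - A = B + (A + (S1 + S2)).
Proof.
rewrite -[A + S1 + _]addrA (addrC A (S1 + _)) addrK (addrC A B) -[B + A + S2]addrA.
by rewrite addrCA [LHS]addrCA (addrCA S1) [RHS]addrCA.
Qed.

Set Implicit Arguments.
Unset Strict Implicit.
Unset Printing Implicit Defensive.

Fixpoint tsz (t : ptree) : nat := let: Node ts := t in (sumn (map tsz ts)).+1.
Definition fsz (u : forest) : nat := sumn (map tsz (fmonom_val u)).
Definition tr (t : ptree) : forest := FMonom [:: t].

Lemma ptree_ind2 (P : ptree -> Prop) :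
  (forall ts, foldr (fun t acc => P t /\ acc) True ts -> P (Node ts)) -> forall t, P t.
Proof.
move=> Hs; refine (fix IH t := match t with Node ts => Hs ts
  ((fix aux l : foldr (fun t acc => P t /\ acc) True l := match l with
     | nil => I
     | cons y l' => conj (IH y) (aux l') end) ts) end).
Qed.

Lemma f1E : (mone : forest) = FMonom [::].
Proof. exact: fmoneE. Qed.

Lemma fmulE (u v : forest) : mmul u v = FMonom (fmonom_val u ++ fmonom_val v).
Proof. exact: fmmulE. Qed.

Lemma fmul_cons t s : mmul (tr t) (FMonom s) = FMonom (t :: s).
Proof. by rewrite fmulE. Qed.

Lemma fsz_mul u v : fsz (mmul u v) = (fsz u + fsz v)%N.
Proof. by rewrite /fsz fmulE /= map_cat sumn_cat. Qed.

Lemma tsz_gt0 t : (0 < tsz t)%N.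
Proof. by case: t. Qed.

Lemma fsz_tr t : fsz (tr t) = tsz t.
Proof. by rewrite /fsz /= addn0. Qed.

Lemma fsz_Bp u : fsz (Bplus_forest u) = (fsz u).+1.
Proof. by rewrite /fsz /= addn0. Qed.

Lemma Bp_neq1 u : Bplus_forest u != mone.
Proof. by rewrite f1E. Qed.

Lemma tr_neq1 t : tr t != mone.
Proof. by rewrite f1E. Qed.

Lemma neq1_cons (u : forest) : u != mone -> exists t s, u = FMonom (t :: s).
Proof.
case: u => [[|t s]]; first by rewrite f1E eqxx.
by move=> _; exists t, s.
Qed.

Lemma pmulE (a b c d : forest) : mmul ((a, b) : fpair) (c, d) = (mmul a c, mmul b d).
Proof. by []. Qed.

Lemma pmulEl (a b : forest) (p : fpair) : mmul ((a, b) : fpair) p = (mmul a p.1, mmul b p.2).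
Proof. by case: p. Qed.
Lemma pmulEr (a b : forest) (p : fpair) : mmul p ((a, b) : fpair) = (mmul p.1 a, mmul p.2 b).
Proof. by case: p. Qed.

Section Ops2.
Variable K : fieldType.
Notation e u := (<< u >> : H K).
Notation ee p := (<< p >> : H2 K).
Notation ep a b := (<< (((a : forest), (b : forest)) : fpair) >> : H2 K).

Lemma UU (M : monomType) (p q : M) : (<< p >> : {malg K[M]}) * << q >> = << mmul p q >>.
Proof. by rewrite malgM_def fgmulUU mul1r. Qed.

Lemma one_e : (1 : H K) = e mone.
Proof. by []. Qed.

Lemma tens_e u v : tens (e u) (e v) = << (u, v) >>.
Proof. by rewrite /tens !msuppU1 !big_seq_fset1 !mcoeffUU mulr1 scale1r. Qed.

Lemma Bplus_e u : Bplus (e u) = e (Bplus_forest u).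
Proof. by rewrite /Bplus msuppU1 big_seq_fset1 mcoeffUU scale1r. Qed.

Lemma IdxBplusE z : IdxBplus z = Lg (fun p : fpair => ee (p.1, Bplus_forest p.2)) z.
Proof. by rewrite /IdxBplus LgE; apply: eq_bigr => p _; rewrite Bplus_e tens_e. Qed.

Lemma convE (Delta : H K -> H2 K) (f g : H K -> H K) (x : H K) :
  conv Delta f g x = Lg (fun p : fpair => f << p.1 >> * g << p.2 >>) (Delta x).
Proof. by rewrite LgE. Qed.

Lemma eps_e u : unit_eps (e u) = (u == mone)%:R *: 1.
Proof. by rewrite /unit_eps /eps mcoeffU1. Qed.

Variable Delta : H K -> H2 K.
Hypothesis cop : is_coproduct Delta.

Lemma D1 : Delta (e mone) = ep mone mone.
Proof. by case: cop => h _ _; rewrite -one_e h one_e tens_e. Qed.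

Lemma Dmul u v : Delta (e (mmul u v)) =
  ep u mone * Delta (e v) + Delta (e u) * ep mone v - ep u v.
Proof. by case: cop => _ h _; rewrite -UU h one_e !tens_e. Qed.

Lemma DB u : Delta (e (Bplus_forest u)) =
  ep (Bplus_forest u) mone + Lg (fun p : fpair => ee (p.1, Bplus_forest p.2)) (Delta (e u)).
Proof. by case: cop => _ _ h; rewrite -Bplus_e h Bplus_e one_e tens_e IdxBplusE. Qed.

Definition StF u := exists R : seq fpair, Delta (e u) = ep mone u + \sum_(p <- R) ee p
   /\ all (fun p : fpair => (p.1 != mone) && (fsz p.2 < fsz u)%N) R.
Definition StT t := exists R : seq fpair,
  Delta (e (tr t)) = ep (tr t) mone + ep mone (tr t) + \sum_(p <- R) ee p
   /\ all (fun p : fpair => [&& p.1 != mone, p.2 != mone & (fsz p.2 < tsz t)%N]) R.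

Lemma StF_nil : StF (FMonom [::]).
Proof. by exists [::]; rewrite -f1E D1 big_nil addr0. Qed.

Lemma StF_cons t s : StT t -> StF (FMonom s) -> StF (FMonom (t :: s)).
Proof.
move=> [Rt [Et At]] [Rs [Es As]].
exists ((tr t, FMonom s) :: [seq (mmul (tr t) p.1, p.2) | p <- Rs]
          ++ [seq (p.1, mmul p.2 (FMonom s)) | p <- Rt]); split.
  have E1 : \sum_(i <- Rs) ep (tr t) mone * ee i = \sum_(i <- Rs) ep (mmul (tr t) i.1) i.2.
    by apply: eq_bigr => p _; rewrite UU pmulEl mul1m.
  have E2 : \sum_(i <- Rt) ee i * ep mone (FMonom s) = \sum_(i <- Rt) ep i.1 (mmul i.2 (FMonom s)).
    by apply: eq_bigr => p _; rewrite UU pmulEr mulm1.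
  rewrite -fmul_cons Dmul Et Es !mulrDr !mulrDl mulr_sumr mulr_suml !UU !pmulE E1 E2.
  rewrite big_cons big_cat !big_map !mulm1 !mul1m.
  exact: zlem1.
rewrite /= all_cat !all_map tr_neq1 /=; apply/and3P; split.
- by rewrite /fsz /= -[X in (X < _)%N]add0n ltn_add2r tsz_gt0.
- apply/allP => p /(allP As) /andP [_ H] /=; rewrite fmulE /= f1E /=.
  by rewrite /fsz /= (leq_trans H) // leq_addl.
- apply/allP => p /(allP At) /and3P [H1 _ H] /=; rewrite H1 /= /fsz fmulE /= map_cat sumn_cat.
  by rewrite ltn_add2r.
Qed.

Lemma StT_node ts : StF (FMonom ts) -> StT (Node ts).
Proof.
move=> [R [E A]]; exists [seq (p.1, Bplus_forest p.2) | p <- R]; split.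
  rewrite /tr -[FMonom [:: Node ts]]/(Bplus_forest (FMonom ts)) DB E LgD (@Lg1 K fpair fpair) /= Lg_sum big_map addrA.
  by congr (_ + _); apply: eq_bigr => p _; rewrite (@Lg1 K fpair fpair).
rewrite all_map; apply/allP => p /(allP A) /andP [H1 H] /=; rewrite H1 Bp_neq1 /=.
by rewrite fsz_Bp ltnS.
Qed.

Lemma St_all : forall t, StT t.
Proof.
apply: ptree_ind2 => ts H; apply: StT_node.
elim: ts H => [|t s IH] /=; first by move=> _; exact: StF_nil.
by move=> [Ht Hs]; apply: StF_cons => //; apply: IH.
Qed.

Lemma StF_all u : StF u.
Proof.
case: u => s; elim: s => [|t s IH]; first exact: StF_nil.
by apply: StF_cons => //; apply: St_all.
Qed.

End Ops2.

Section Spec.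
Variable K : fieldType.
Notation e u := (<< u >> : H K).

Fact LP_key : unit. Proof. exact: tt. Qed.
Definition LP (h : fpair -> H K) (z : H2 K) : H K := locked_with LP_key (@Lg K _ _ h z).
Lemma LPE h z : LP h z = @Lg K _ _ h z.
Proof. by rewrite /LP unlock. Qed.

Lemma LP_conv (Delta : H K -> H2 K) (f g : H K -> H K) (x : H K) :
  conv Delta f g x = LP (fun p => f << p.1 >> * g << p.2 >>) (Delta x).
Proof. by rewrite LPE LgE. Qed.

Lemma LP1 h (m : fpair) : LP h (<< m >> : H2 K) = h m.
Proof. rewrite ?LPE; exact: Lg1. Qed.

Lemma LPD h x y : LP h (x + y) = LP h x + LP h y.
Proof. rewrite ?LPE; exact: LgD. Qed.

Lemma LPB h x y : LP h (x - y) = LP h x - LP h y.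
Proof. rewrite ?LPE; exact: LgB. Qed.

Lemma LP_sum h (I : Type) (r : seq I) (F : I -> H2 K) :
  LP h (\sum_(i <- r) F i) = \sum_(i <- r) LP h (F i).
Proof. by rewrite LPE Lg_sum; apply: eq_bigr => i _; rewrite LPE. Qed.

Lemma LP_ext h1 h2 z : h1 =1 h2 -> LP h1 z = LP h2 z.
Proof. rewrite ?LPE; exact: Lg_ext. Qed.

Lemma LP_mul_left a h z : LP (fun p => a * h p) z = a * LP h z.
Proof. rewrite ?LPE; exact: Lg_mul_left. Qed.

Lemma LP_mull h (q : fpair) (z : H2 K) :
  LP h ((<< q >> : H2 K) * z) = LP (fun p => h (mmul q p)) z.
Proof.
rewrite !LPE {1}(monalgE z) mulr_sumr Lg_sum LgE; apply: eq_bigr => p _.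
by rewrite malgM_def fgmulUU LgU mul1r.
Qed.

Lemma LP_mulr h (q : fpair) (z : H2 K) :
  LP h (z * (<< q >> : H2 K)) = LP (fun p => h (mmul p q)) z.
Proof.
rewrite !LPE {1}(monalgE z) mulr_suml Lg_sum LgE; apply: eq_bigr => p _.
by rewrite malgM_def fgmulUU LgU mulr1.
Qed.

Lemma LP_comp h (g : fpair -> fpair) z :
  LP h (Lg (fun p => (<< g p >> : H2 K)) z) = LP (fun p => h (g p)) z.
Proof. rewrite ?LPE; exact: Lg_comp. Qed.

Variable Delta : H K -> H2 K.
Hypothesis cop : is_coproduct Delta.

Lemma LPDmul h (u v : forest) :
  LP h (Delta (e (mmul u v))) =
  LP (fun p => h (mmul ((u, mone) : fpair) p)) (Delta (e v))
  + LP (fun p => h (mmul p ((mone, v) : fpair))) (Delta (e u)) - h (u, v).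
Proof.
have E1 := LP_mull h (u, mone) (Delta (e v)).
have E2 := LP_mulr h (mone, v) (Delta (e u)).
rewrite (Dmul cop) LPB LPD.
apply: congr2; first by apply: congr2; [exact: E1 | exact: E2].
by congr (- _); exact: LP1.
Qed.

Lemma LPDB h (u : forest) :
  LP h (Delta (e (Bplus_forest u))) =
  h (Bplus_forest u, mone) + LP (fun p : fpair => h (p.1, Bplus_forest p.2)) (Delta (e u)).
Proof.
rewrite (DB cop) LPD; apply: congr2; first exact: LP1.
exact: (LP_comp h (fun p : fpair => ((p.1, Bplus_forest p.2) : fpair))).
Qed.

Lemma LPD1 h : LP h (Delta (e mone)) = h (mone, mone).
Proof. by rewrite (D1 cop); exact: LP1. Qed.
End Spec.

Set Implicit Arguments.
Unset Strict Implicit.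
Unset Printing Implicit Defensive.

Fixpoint bitvecs (n : nat) : seq (seq bool) :=
  if n is n'.+1 then [seq true :: b | b <- bitvecs n'] ++ [seq false :: b | b <- bitvecs n']
  else [:: [::]].

Section Anti.
Variable K : fieldType.
Notation e u := (<< u >> : H K).
Notation ee p := (<< p >> : H2 K).
Notation ep a b := (<< (((a : forest), (b : forest)) : fpair) >> : H2 K).
Variable Delta : H K -> H2 K.
Hypothesis cop : is_coproduct Delta.
Variable S : H K -> H K.
Hypothesis HS : forall x : H K, conv Delta S id x = unit_eps x.
Hypothesis HI : forall x : H K, conv Delta id S x = unit_eps x.

Definition hS (X : forest -> H K) := fun p : fpair => S (e p.1) * X p.2.
Definition hI (Y : forest -> H K) := fun p : fpair => e p.1 * Y p.2.

Lemma eps_neq u : u != mone -> unit_eps (e u) = 0.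
Proof. by move=> /negbTE h; rewrite eps_e h scale0r. Qed.

Lemma S1 : S (e mone) = 1.
Proof.
have := HS (e mone); rewrite LP_conv (D1 cop) LP1 /= eps_e eqxx scale1r.
by rewrite -one_e mulr1.
Qed.

Lemma S0 n : forall t s, s != [::] -> (fsz (FMonom (t :: s)) <= n)%N -> S (e (FMonom (t :: s))) = 0.
Proof.
elim: n => [|n IH] t s hs hn.
  by move: hn; rewrite /fsz /= leqn0 addn_eq0 (negbTE (lt0n_neq0 (tsz_gt0 t))).
have hy : FMonom s != mone by rewrite f1E; apply: contra hs => /eqP [->].
have := HI (e (mmul (tr t) (FMonom s))).
rewrite LP_conv (LPDmul cop).
rewrite [X in X + _ - _ = _](_ : _ = 0); last first.
  rewrite -(mulr0 (e (tr t))) -(eps_neq hy) -HI LP_conv -LP_mul_left.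
  apply: LP_ext => p.
  by rewrite pmulEl /= mul1m -UU mulrA.
have [R [ER AR]] := St_all cop t.
rewrite ER !LPD !LP1 LP_sum /=.
rewrite big_seq big1; last first.
  move=> p /(allP AR) /and3P [_ h2 h3]; rewrite LP1 /=.
  have [t' [s' Ep]] := neq1_cons h2.
  rewrite mulm1 Ep fmulE /= (IH t') ?mulr0 //; first by case: (s') hs.
  move: h3 hn; rewrite Ep /fsz /= map_cat sumn_cat => h3 hn.
  by rewrite addnA -ltnS (leq_trans _ hn) // ltn_add2r.
rewrite !mulm1 !mul1m fmul_cons -one_e mul1r addr0 add0r addrAC subrr add0r.
by rewrite eps_neq // f1E.
Qed.

Lemma Tel t (y : forest) (X : forest -> H K) :
  LP (fun p : fpair => S << p.1 >> * X p.2) (Delta (e (mmul (tr t) y))) =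
  LP (fun p : fpair => S << p.1 >> * X (mmul p.2 y)) (Delta (e (tr t))).
Proof.
case: (eqVneq y mone) => [->|hy].
  rewrite mulm1; apply: LP_ext => p; by rewrite mulm1.
rewrite [LHS](LPDmul cop).
have [R [ER AR]] := StF_all cop y.
rewrite [in X in X + _ - _ = _]ER.
rewrite [X in X + _ - _ = _]LPD.
rewrite [X in X + _ + _ - _ = _]LP1.
rewrite [X in _ + X + _ - _ = _]LP_sum /=.
rewrite big_seq big1 ?addr0; last first.
  move=> p /(allP AR) /andP [h1 _]; rewrite LP1 /=.
  have [t' [s' Ep]] := neq1_cons h1.
  by rewrite Ep fmul_cons (@S0 (fsz (FMonom [:: t, t' & s']))) ?mul0r.
rewrite mulm1 mul1m addrAC subrr add0r.
apply: LP_ext => p /=; by rewrite mulm1.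
Qed.

Lemma TelB u (X : forest -> H K) :
  LP (fun p : fpair => S << p.1 >> * X p.2) (Delta (e (Bplus_forest u))) =
  S (e (Bplus_forest u)) * X mone + LP (fun p : fpair => S << p.1 >> * X (Bplus_forest p.2)) (Delta (e u)).
Proof. by rewrite [LHS](LPDB cop). Qed.

Definition G t (X : ptree -> H K) : H K :=
  \sum_(bs <- bitvecs (ldepth t)) (-1) ^+ (count id bs) *: (e (FMonom (cutL t bs).2) * X (cutL t bs).1).

Lemma G_ext t X1 X2 : X1 =1 X2 -> G t X1 = G t X2.
Proof. by move=> h; apply: eq_bigr => bs _; rewrite h. Qed.

Lemma G_leaf X : G (Node [::]) X = X (Node [::]).
Proof. by rewrite /G /= big_cons big_nil expr0 scale1r -f1E -one_e mul1r addr0. Qed.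

Lemma G_node t1 rest X : G (Node (t1 :: rest)) X =
  - (G t1 (fun r => e (tr r)) * X (Node rest)) + G t1 (fun r => X (Node (r :: rest))).
Proof.
rewrite {1}/G /= big_cat !big_map.
apply: congr2.
  rewrite /G mulr_suml -sumrN; apply: eq_bigr => b _; case: cutL => r ds /=.
  by rewrite exprS mulN1r scaleNr -scalerAl UU fmulE.
by apply: eq_bigr => b _; case: cutL.
Qed.


Lemma main t : S (e (tr t)) = - G t (fun r => e (tr r)) /\
  forall X : forest -> H K,
    LP (fun p : fpair => S << p.1 >> * X p.2) (Delta (e (tr t))) =
    G t (fun r => X (tr r)) - G t (fun r => e (tr r)) * X mone.
Proof.
elim/ptree_ind2: t => ts IH.
have P : forall X : forest -> H K,
    LP (fun p : fpair => S << p.1 >> * X p.2) (Delta (e (tr (Node ts)))) =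
    S (e (tr (Node ts))) * X mone + G (Node ts) (fun r => X (tr r)).
  move=> X; case: ts IH => [|t1 rest] /= IH.
    have Et : tr (Node [::]) = Bplus_forest mone by rewrite f1E.
    rewrite Et [LHS]TelB -Et; congr (_ + _).
    rewrite [LHS](LPD1 cop) /= S1 mul1r G_leaf.
    by rewrite -Et.
  have Et : tr (Node (t1 :: rest)) = Bplus_forest (mmul (tr t1) (FMonom rest)) by rewrite fmul_cons.
  rewrite Et [LHS]TelB -Et; congr (_ + _).
  rewrite [LHS](Tel t1 (FMonom rest) (fun v => X (Bplus_forest v))).
  rewrite [LHS](proj2 (proj1 IH) (fun U => X (Bplus_forest (mmul U (FMonom rest))))).
  rewrite G_node.
  rewrite [LHS]addrC.
  apply: congr2.
    by rewrite mul1m.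
  rewrite /G; apply: eq_bigr => b _.
  by rewrite fmul_cons.
have ES : S (e (tr (Node ts))) = - G (Node ts) (fun r => e (tr r)).
  have := HS (e (tr (Node ts))).
  rewrite LP_conv eps_neq ?tr_neq1 //.
  rewrite [LHS](P (fun v => e v)) -one_e mulr1 => /eqP; rewrite addr_eq0 => /eqP.
  exact.
split => // X.
rewrite [LHS]P ES mulNr addrC.
by [].
Qed.

End Anti.

Set Implicit Arguments.
Unset Strict Implicit.
Unset Printing Implicit Defensive.

Lemma mem_map_cons (b c : bool) (x : seq bool) (B : seq (seq bool)) :
  (b :: x \in [seq c :: y | y <- B]) = (b == c) && (x \in B).
Proof.
apply/mapP/andP => [[y yB [-> ->]] | [/eqP -> xB]]; first by rewrite eqxx.
by exists x.
Qed.

Lemma mem_bitvecs n x : (x \in bitvecs n) = (size x == n).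
Proof.
elim: n x => [|n IH] [|b x] //=.
- by rewrite mem_cat; apply/negbTE/norP; split; apply/mapP => -[y _].
- rewrite mem_cat !mem_map_cons eqSS -IH; case: b => /=; rewrite ?orbF //.
Qed.

Lemma uniq_bitvecs n : uniq (bitvecs n).
Proof.
elim: n => //= n IH; rewrite cat_uniq !map_inj_uniq ?IH //=; try by move=> ? ? [].
rewrite andbT; apply/hasPn => x /mapP [y _ ->]; by rewrite mem_map_cons.
Qed.

Lemma cnt n (c : {set 'I_n}) : #|c| = count id [seq i \in c | i <- enum 'I_n].
Proof. rewrite count_map cardE /enum_mem size_filter (@eq_filter _ _ predT) // filter_predT. by apply: eq_count. Qed.

Lemma nth_cb n (c : {set 'I_n}) (i : 'I_n) : nth false [seq j \in c | j <- enum 'I_n] i = (i \in c).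
Proof. by rewrite (nth_map i) ?size_enum_ord // nth_ord_enum. Qed.

Lemma sets_bitvecs n (V : zmodType) (F : seq bool -> V) :
  \sum_(c : {set 'I_n}) F [seq i \in c | i <- enum 'I_n] = \sum_(bs <- bitvecs n) F bs.
Proof.
set cb := fun c : {set 'I_n} => [seq i \in c | i <- enum 'I_n].
have cb_inj : injective cb.
  move=> c1 c2 E; apply/setP => i.
  by rewrite -!nth_cb -/(cb c1) E.
rewrite -(big_map cb predT F); apply: perm_big; apply: uniq_perm.
- by rewrite map_inj_uniq ?index_enum_uniq.
- exact: uniq_bitvecs.
move=> x; rewrite mem_bitvecs; apply/mapP/idP => [[c _ ->]|/eqP sx].
  by rewrite size_map size_enum_ord.
exists [set i : 'I_n | nth false x i]; first exact: mem_index_enum.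
apply: (@eq_from_nth _ false); first by rewrite size_map size_enum_ord sx.
move=> i; rewrite sx => hi.
by rewrite (nth_map (Ordinal hi)) ?size_enum_ord // inE (nth_enum_ord _ hi).
Qed.

Unset Implicit Arguments.
Set Strict Implicit.

Theorem proposition15 (K : fieldType)
    (Delta : {linear H K -> H2 K}) (S : {linear H K -> H K}) :
  is_coproduct Delta ->
  (forall x : H K, conv Delta S id x = unit_eps x) ->
  (forall x : H K, conv Delta id S x = unit_eps x) ->
  forall t : ptree,
    S (<< FMonom [:: t] >> : H K) =
      - \sum_(c : {set 'I_(ldepth t)})
          ((-1) ^+ #|c| : K) *: (<< FMonom (Wc c) >> : H K).
Proof.
move=> cop HS HI t.
have [M _] := main cop HS HI t.
rewrite [LHS]M; congr (- _).
rewrite /G.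
pose F := fun bs : seq bool => ((-1) ^+ count id bs : K) *:
   (<< FMonom (let: (r, ds) := cutL t bs in ds ++ [:: r]) >> : H K).
transitivity (\sum_(bs <- bitvecs (ldepth t)) F bs).
  apply: eq_bigr => bs _; rewrite /F; case: cutL => r ds /=.
  by rewrite UU fmulE.
rewrite -sets_bitvecs; apply: eq_bigr => c _.
by rewrite /F /Wc /cut_bits cnt.
Qed.
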